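(* Let $\Im$ be a finite simplicial graph with vertex set $X$ in which every closed path has even length, and let $G$ (resp. $M$) be the right-angled Artin group (resp. monoid) presented by generators $X$ and relations $ab=ba$ for each edge $a-b$ of $\Im$. Colour the vertices of $\Im$ black and white so that adjacent vertices have different colours; let $B$, $W$ be the sets of black and white vertices. Choose a total order on $X\cup X^{-1}$ in which every element of $B\cup B^{-1}$ is greater than every element of $W\cup W^{-1}$, and let $\Re$ be the rewriting system on $X\cup X^{-1}$ consisting of the free reduction rules $xx^{-1}\rightarrow1$, $x^{-1}x\rightarrow1$ ($x\in X$) together with the rules $a^{\gamma}b^{\epsilon}\rightarrow b^{\epsilon}a^{\gamma}$ for every edge $a-b$ of $\Im$ with $a\in B$, $b\in W$, and all $\gamma,\epsilon\in\{1,-1\}$ (these rules are oriented according to the length-lexicographical order induced by the chosen total order). Then $\Re$ is a finite complete rewriting system for $G$, it satisfies the condition $C^{+}$, and $\Re^{+}=\{ab\rightarrow ba : a-b\text{ an edge},\ a\in B,\ b\in W\}$ is a rewriting system for $M$ (i.e. $M\cong X^{*}/\equiv_{\Re^{+}}$).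
   Context: A rewriting system on an alphabet $\Sigma$ is a set of rules $l\rightarrow r$ in $\Sigma^{*}\times\Sigma^{*}$; $ulv$ reduces to $urv$. Complete means terminating (no infinite reduction chains) and confluent (words with a common ancestor under $\rightarrow^{*}$ have a common descendant). A rewriting system for $G$ is one on $X\cup X^{-1}$ whose generated congruence equals that generated by the defining relations of $G$ together with $xx^{-1}=1$, $x^{-1}x=1$ ($x\in X$). A word is positive if it lies in $X^{*}$ (empty word included). $\Re^{+}$ is the set of rules of $\Re$ with positive left-hand side. $\Re$ satisfies $C^{+}$ if $\Re^{+}\neq\emptyset$ and every rule with positive left-hand side has positive right-hand side. $\equiv_{\Re^{+}}$ is the congruence on $X^{*}$ generated by $\Re^{+}$. *)

(* Defs.v *)
From mathcomp Require Import all_boot.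
From Stdlib Require Import Relations.
Set Implicit Arguments. Unset Strict Implicit. Unset Printing Implicit Defensive.

Section Rewriting.
Variable A : eqType.

Definition rsystem := seq (seq A * seq A).

Definition step (R : rsystem) (w w' : seq A) : Prop :=
  exists (l r u v : seq A), (l, r) \in R /\ w = u ++ l ++ v /\ w' = u ++ r ++ v.

Definition reduces (R : rsystem) := clos_refl_trans (seq A) (step R).

Definition terminating (R : rsystem) : Prop :=
  well_founded (fun w' w => step R w w').

Definition confluent (R : rsystem) : Prop :=
  forall w u v, reduces R w u -> reduces R w v ->
    exists z, reduces R u z /\ reduces R v z.

Definition complete (R : rsystem) : Prop := terminating R /\ confluent R.

(* the congruence generated by R (the equivalence closure of one-step
   reduction, which is automatically compatible with concatenation) *)
Definition congr_gen (R : rsystem) := clos_refl_sym_trans (seq A) (step R).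

Definition same_congruence (R S : rsystem) : Prop :=
  forall u v, congr_gen R u v <-> congr_gen S u v.
End Rewriting.

(* A letter (x, false) stands for x, (x, true) for x^{-1}. *)
Definition letter (X : finType) := (X * bool)%type.

Definition positive_word (X : finType) (w : seq (letter X)) : bool :=
  all (fun c : letter X => ~~ c.2) w.

Definition free_rules (X : finType) : rsystem (letter X) :=
  [seq ([:: (x, false); (x, true)], [::]) | x <- enum X] ++
  [seq ([:: (x, true); (x, false)], [::]) | x <- enum X].

Definition raag_relations (X : finType) (adj : rel X) : rsystem (letter X) :=
  free_rules X ++
  [seq ([:: (p.1, false); (p.2, false)], [:: (p.2, false); (p.1, false)])
     | p <- enum [pred p : X * X | adj p.1 p.2]].

Definition raam_relations (X : finType) (adj : rel X) : rsystem X :=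
  [seq ([:: p.1; p.2], [:: p.2; p.1]) | p <- enum [pred p : X * X | adj p.1 p.2]].

(* The system Re: free reductions and a^g b^e -> b^e a^g for every edge
   a - b with a black (col a = true) and b white, g, e in {1,-1}. *)
Definition Re (X : finType) (adj : rel X) (col : X -> bool) : rsystem (letter X) :=
  free_rules X ++
  [seq ([:: (q.1.1.1, q.1.2); (q.1.1.2, q.2)], [:: (q.1.1.2, q.2); (q.1.1.1, q.1.2)])
     | q <- enum [pred q : X * X * bool * bool |
                   [&& adj q.1.1.1 q.1.1.2, col q.1.1.1 & ~~ col q.1.1.2]]].

Definition rplus (X : finType) (R : rsystem (letter X)) : rsystem (letter X) :=
  [seq lr <- R | positive_word lr.1].

Definition cond_Cplus (X : finType) (R : rsystem (letter X)) : Prop :=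
  rplus R != [::] /\
  forall l r, (l, r) \in R -> positive_word l -> positive_word r.

(* a positive rule system viewed as a rewriting system on X^* *)
Definition to_positive (X : finType) (R : rsystem (letter X)) : rsystem X :=
  [seq ([seq c.1 | c <- lr.1], [seq c.1 | c <- lr.2]) | lr <- R].

(* Main.v *)
From Stdlib Require Import Relations Lia Wellfounded Wf_nat.
Require Import Defs.
From mathcomp Require Import all_boot.
Set Implicit Arguments. Unset Strict Implicit. Unset Printing Implicit Defensive.

Lemma step_ctx (A : eqType) (R : rsystem A) x y a b :
  step R a b -> step R (x ++ a ++ y) (x ++ b ++ y).
Proof.
move=> [l [r [u [v [H [-> ->]]]]]].
exists l, r, (x ++ u), (v ++ y); split=> //; by rewrite !catA.
Qed.

Lemma red_ctx (A : eqType) (R : rsystem A) x y a b :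
  reduces R a b -> reduces R (x ++ a ++ y) (x ++ b ++ y).
Proof.
elim=> [a' b' H|a'|a' b' c' _ H1 _ H2].
- by apply: rt_step; apply: step_ctx.
- exact: rt_refl.
- exact: rt_trans H1 H2.
Qed.

Lemma congr_ctx (A : eqType) (R : rsystem A) x y a b :
  congr_gen R a b -> congr_gen R (x ++ a ++ y) (x ++ b ++ y).
Proof.
elim=> [a' b' H|a'|a' b' _ H|a' b' c' _ H1 _ H2].
- by apply: rst_step; apply: step_ctx.
- exact: rst_refl.
- exact: rst_sym.
- exact: rst_trans H1 H2.
Qed.

Lemma congr_rule (A : eqType) (R : rsystem A) l r :
  (l, r) \in R -> congr_gen R l r.
Proof.
move=> H; apply: rst_step; exists l, r, [::], [::]; by rewrite !cats0.
Qed.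

Lemma congr_incl (A : eqType) (R S : rsystem A) :
  (forall l r, (l, r) \in R -> congr_gen S l r) ->
  forall u v, congr_gen R u v -> congr_gen S u v.
Proof.
move=> HR u v; elim=> [a b H|a|a b _ H|a b c _ H1 _ H2].
- move: H=> [l [r [x [y [Hm [-> ->]]]]]]; exact: congr_ctx (HR _ _ Hm).
- exact: rst_refl.
- exact: rst_sym.
- exact: rst_trans H1 H2.
Qed.

Definition lconfluent (A : eqType) (R : rsystem A) :=
  forall w u v, step R w u -> step R w v -> exists z, reduces R u z /\ reduces R v z.

Lemma newman (A : eqType) (R : rsystem A) :
  terminating R -> lconfluent R -> confluent R.
Proof.
move=> Ht Hl w; elim/(well_founded_ind Ht): w => w IH u v Hu Hv.
apply clos_rt_rt1n in Hu; apply clos_rt_rt1n in Hv.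
case: Hu IH Hv => [|u1 u' Hu1 Hu'] IH Hv.
  exists v; split; [exact: clos_rt1n_rt|exact: rt_refl].
case: Hv => [|v1 v' Hv1 Hv'].
  exists u'; split; [exact: rt_refl|apply: rt_trans (rt_step _ _ _ _ Hu1) _; exact: clos_rt1n_rt].
have [z0 [Hz1 Hz2]] := Hl _ _ _ Hu1 Hv1.
have [z1 [Hu'z1 Hz0z1]] := IH _ Hu1 _ _ (clos_rt1n_rt _ _ _ _ Hu') Hz1.
have [z2 [Hv'z2 Hz1z2]] := IH _ Hv1 _ _ (clos_rt1n_rt _ _ _ _ Hv') (rt_trans _ _ _ _ _ Hz2 Hz0z1).
exists z2; split=> //; exact: rt_trans Hu'z1 Hz1z2.
Qed.

Lemma cat_split (A : Type) (u1 u2 s t : seq A) :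
  size u1 <= size u2 -> u1 ++ s = u2 ++ t -> exists m, u2 = u1 ++ m /\ s = m ++ t.
Proof.
elim: u1 u2 => [|a u1 IH] [|b u2] //=.
- move=> _ ->; by exists [::].
- by move=> _ ->; exists (b :: u2).
- rewrite ltnS => Hs [-> He]; have [m [-> ->]] := IH _ Hs He; by exists m.
Qed.


Lemma free_mem (X : finType) l r :
  (l, r) \in free_rules X <-> exists x b, l = [:: (x, b); (x, ~~ b)] /\ r = [::].
Proof.
rewrite /free_rules mem_cat; split.
- case/orP=> /mapP [x _ [-> ->]]; by [exists x, false | exists x, true].
- move=> [x [[] [-> ->]]]; apply/orP; [right|left]; apply/mapP; exists x => //; exact: mem_enum.
Qed.

Lemma Re_mem (X : finType) (adj : rel X) col l r :
  (l, r) \in Re adj col <->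
  (exists x b, l = [:: (x, b); (x, ~~ b)] /\ r = [::]) \/
  (exists a c g e, [/\ adj a c, col a, ~~ col c,
      l = [:: (a, g); (c, e)] & r = [:: (c, e); (a, g)]]).
Proof.
rewrite /Re mem_cat; split.
- case/orP=> [/free_mem H|/mapP [[[[a c] g] e] Hq [-> ->]]]; [by left|right].
  rewrite mem_enum /= in Hq; case/and3P: Hq => H1 H2 H3.
  by exists a, c, g, e.
- case=> [/free_mem H|[a [c [g [e [H1 H2 H3 -> ->]]]]]]; apply/orP; [by left|right].
  apply/mapP; exists (a, c, g, e) => //; rewrite mem_enum /=; exact/and3P.
Qed.

Lemma raag_mem (X : finType) (adj : rel X) l r :
  (l, r) \in raag_relations adj <->
  (exists x b, l = [:: (x, b); (x, ~~ b)] /\ r = [::]) \/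
  (exists a c, [/\ adj a c, l = [:: (a, false); (c, false)] & r = [:: (c, false); (a, false)]]).
Proof.
rewrite /raag_relations mem_cat; split.
- case/orP=> [/free_mem H|/mapP [[a c] Hq [-> ->]]]; [by left|right].
  rewrite mem_enum /= in Hq; by exists a, c.
- case=> [/free_mem H|[a [c [H1 -> ->]]]]; apply/orP; [by left|right].
  apply/mapP; exists (a, c) => //; by rewrite mem_enum.
Qed.

Lemma raam_mem (X : finType) (adj : rel X) l r :
  (l, r) \in raam_relations adj <->
  (exists a c, [/\ adj a c, l = [:: a; c] & r = [:: c; a]]).
Proof.
rewrite /raam_relations; split.
- move=> /mapP [[a c] Hq [-> ->]]; rewrite mem_enum /= in Hq; by exists a, c.
- move=> [a [c [H1 -> ->]]]; apply/mapP; exists (a, c) => //; by rewrite mem_enum.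
Qed.


Ltac nlia := rewrite -?plusE -?multE -?minusE; lia.

Section Inv.
Context (X : finType) (col : X -> bool).
Definition nw (s : seq (letter X)) := count (fun c : letter X => ~~ col c.1) s.
Definition nb (s : seq (letter X)) := count (fun c : letter X => col c.1) s.
Fixpoint inv (s : seq (letter X)) : nat :=
  if s is c :: s' then (if col c.1 then nw s' else 0) + inv s' else 0.

Lemma inv_cat u v : inv (u ++ v) = inv u + inv v + nb u * nw v.
Proof.
elim: u => [|c u IH] /=.
 by rewrite add0n mul0n addn0.
rewrite IH /nw /nb /= count_cat.
case: (col c.1) => /=; rewrite ?mulnDl ?mul1n ?add0n ?mul0n; nlia.
Qed.
End Inv.

Lemma Re_term (X : finType) (adj : rel X) col : terminating (Re adj col).
Proof.
pose m (w : seq (letter X)) := size w + inv col w.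
have H : forall w w', step (Re adj col) w w' -> (m w' < m w)%coq_nat.
  move=> w w' [l [r [u [v [Hm [-> ->]]]]]].
  case/Re_mem: Hm => [[x [b [-> ->]]]|[a [c [g [e [H1 H2 H3 -> ->]]]]]].
  - rewrite /m !size_cat !inv_cat /= /nw /nb /=.
    case: (col x) => /=; rewrite ?mulnDr; nlia.
  - rewrite /m !size_cat !inv_cat /= /nw /nb /= H2 (negbTE H3) /= !mulnDr.
    nlia.
rewrite /terminating.
apply: (@wf_incl _ _ (ltof _ m)) => [a b Hs|]; [exact: H| exact: well_founded_ltof].
Qed.


Lemma red1 (A : eqType) (R : rsystem A) x y l r :
  (l, r) \in R -> reduces R (x ++ l ++ y) (x ++ r ++ y).
Proof. move=> H; apply: rt_step; by exists l, r, x, y. Qed.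

Section Conf.
Variables (X : finType) (adj : rel X) (col : X -> bool).
Local Notation R := (Re adj col).

Lemma free_in x b : ([:: (x, b); (x, ~~ b)], [::]) \in R.
Proof. apply/Re_mem; left; by exists x, b. Qed.

Lemma swap_in a c g e : adj a c -> col a -> ~~ col c ->
  ([:: (a, g); (c, e)], [:: (c, e); (a, g)]) \in R.
Proof. move=> *; apply/Re_mem; right; by exists a, c, g, e. Qed.

Lemma Re_det l r1 r2 : (l, r1) \in R -> (l, r2) \in R -> r1 = r2.
Proof.
case/Re_mem=> [[x [b [-> ->]]]|[a [c [g [e [H1 H2 H3 -> ->]]]]]];
case/Re_mem=> [[x' [b' [E ->]]]|[a' [c' [g' [e' [H1' H2' H3' E ->]]]]]] //.
- by case: E => E1 E2 E3 E4; subst; rewrite H2' in H3'.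
- by case: E => E1 E2 E3 E4; subst; rewrite H2 in H3.
- by case: E => E1 E2 E3 E4; subst.
Qed.

Lemma Re_shape l r : (l, r) \in R -> exists p q, l = [:: p; q].
Proof.
case/Re_mem=> [[x [b [-> _]]]|[a [c [g [e [_ _ _ -> _]]]]]]; by eexists; eexists.
Qed.

Lemma crit p q s r1 r2 : ([:: p; q], r1) \in R -> ([:: q; s], r2) \in R ->
  exists z, reduces R (r1 ++ [:: s]) z /\ reduces R (p :: r2) z.
Proof.
case/Re_mem=> [[x [b [Hl ->]]]|[a [c [g [e [H1 H2 H3 Hl ->]]]]]];
case/Re_mem=> [[x' [b' [Hl' ->]]]|[a' [c' [g' [e' [H1' H2' H3' Hl' ->]]]]]];
case: Hl => Ep Eq; subst p q; case: Hl' => E1 E2 E3; subst.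
- by rewrite negbK; exists [:: (x', b)]; split; exact: rt_refl.
- exists [:: (c', e')]; split; first exact: rt_refl.
  apply: (rt_trans _ _ _ [:: (c', e'); (a', b); (a', ~~ b)]).
    exact: (red1 [::] [:: (a', ~~ b)] (swap_in b e' H1' H2' H3')).
  exact: (red1 [:: (c', e')] [::] (free_in a' b)).
- exists [:: (a, g)]; split; last exact: rt_refl.
  apply: (rt_trans _ _ _ [:: (x', b'); (x', ~~ b'); (a, g)]).
    exact: (red1 [:: (x', b')] [::] (swap_in g (~~ b') H1 H2 H3)).
  exact: (red1 [::] [:: (a, g)] (free_in x' b')).
- by rewrite H2' in H3.
Qed.

Lemma lconf_ord u1 v1 l1 r1 u2 v2 l2 r2 :
  size u1 <= size u2 -> (l1, r1) \in R -> (l2, r2) \in R ->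
  u1 ++ l1 ++ v1 = u2 ++ l2 ++ v2 ->
  exists z, reduces R (u1 ++ r1 ++ v1) z /\ reduces R (u2 ++ r2 ++ v2) z.
Proof.
move=> Hs H1 H2 E; have [m [-> Em]] := cat_split Hs E.
have [p1 [q1 El1]] := Re_shape H1; have [p2 [q2 El2]] := Re_shape H2.
subst l1 l2.
case: m Em => [|x [|y m']] /= Em.
- case: Em => ? ? ?; subst; rewrite cats0 (Re_det H1 H2).
  exists (u1 ++ r2 ++ v2); split; exact: rt_refl.
- case: Em => ? ? ?; subst.
  have [z [Hz1 Hz2]] := crit H1 H2.
  exists (u1 ++ z ++ v2); split.
    have -> : u1 ++ r1 ++ q2 :: v2 = u1 ++ (r1 ++ [:: q2]) ++ v2 by rewrite -catA.
    exact: red_ctx.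
  have -> : (u1 ++ [:: x]) ++ r2 ++ v2 = u1 ++ (x :: r2) ++ v2 by rewrite -catA.
  exact: red_ctx.
- case: Em => ? ? ?; subst.
  exists (u1 ++ r1 ++ m' ++ r2 ++ v2); split.
    have := red1 (u1 ++ r1 ++ m') v2 H2; by rewrite -!catA.
  have := red1 u1 (m' ++ r2 ++ v2) H1; by rewrite -!catA.
Qed.

Lemma Re_lconf : lconfluent R.
Proof.
move=> w u v [l1 [r1 [u1 [v1 [H1 [E1 ->]]]]]] [l2 [r2 [u2 [v2 [H2 [E2 ->]]]]]].
case: (leqP (size u1) (size u2)) => Hs.
- apply: lconf_ord Hs H1 H2 _; by rewrite -E1 -E2.
- have [z [Hz1 Hz2]] := lconf_ord (ltnW Hs) H2 H1 (etrans (esym E2) E1).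
  by exists z.
Qed.

Lemma Re_complete : complete R.
Proof. split; [exact: Re_term | apply: newman; [exact: Re_term|exact: Re_lconf]]. Qed.
End Conf.


Lemma comm_inv (A : eqType) (S : rsystem A) x x' y :
  congr_gen S [:: x; y] [:: y; x] -> ([:: x; x'], [::]) \in S -> ([:: x'; x], [::]) \in S ->
  congr_gen S [:: x'; y] [:: y; x'].
Proof.
move=> Hc H1 H2.
apply: (rst_trans _ _ _ [:: x'; y; x; x']).
  exact: (congr_ctx [:: x'; y] [::] (rst_sym _ _ _ _ (congr_rule H1))).
apply: (rst_trans _ _ _ [:: x'; x; y; x']).
  exact: (congr_ctx [:: x'] [:: x'] (rst_sym _ _ _ _ Hc)).
exact: (congr_ctx [::] [:: y; x'] (congr_rule H2)).
Qed.

Section Cong.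
Variables (X : finType) (adj : rel X) (col : X -> bool).
Hypothesis adj_sym : symmetric adj.
Hypothesis col_proper : forall a b, adj a b -> col a != col b.
Local Notation R := (Re adj col).
Local Notation G := (raag_relations adj).

Lemma raag_free x b : ([:: (x, b); (x, ~~ b)], [::]) \in G.
Proof. apply/raag_mem; left; by exists x, b. Qed.

Lemma raag_comm a c g e : adj a c -> congr_gen G [:: (a, g); (c, e)] [:: (c, e); (a, g)].
Proof.
have P1 : forall a c g, adj a c -> congr_gen G [:: (a, g); (c, false)] [:: (c, false); (a, g)].
  move=> a0 c0 g0 H.
  have B : congr_gen G [:: (a0, false); (c0, false)] [:: (c0, false); (a0, false)].
    apply: congr_rule; apply/raag_mem; right; by exists a0, c0.
  case: g0 => //; apply: (comm_inv B); [exact: (raag_free a0 false)| exact: (raag_free a0 true)].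
move=> H; case: e; last exact: P1.
apply: rst_sym; apply: (comm_inv (rst_sym _ _ _ _ (P1 _ _ g H))).
  exact: (raag_free c false).
exact: (raag_free c true).
Qed.

Lemma Re_raag : same_congruence R G.
Proof.
move=> u v; split; apply: congr_incl => l r.
- case/Re_mem=> [[x [b [-> ->]]]|[a [c [g [e [H1 H2 H3 -> ->]]]]]].
    exact/congr_rule/raag_free.
  exact: raag_comm.
- case/raag_mem=> [[x [b [-> ->]]]|[a [c [H1 -> ->]]]].
    exact/congr_rule/free_in.
  have := col_proper H1; case Ea: (col a); case Ec: (col c) => // _.
    apply: congr_rule; apply: swap_in => //; by rewrite Ec.
  apply: rst_sym; apply: congr_rule; apply: swap_in => //; [by rewrite adj_sym|by rewrite Ea].
Qed.

Lemma rplus_mem l r : (l, r) \in rplus R <->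
     exists a b, [/\ adj a b, col a, ~~ col b,
                    l = [:: (a, false); (b, false)] & r = [:: (b, false); (a, false)]].
Proof.
rewrite /rplus mem_filter /=; split.
- case/andP=> Hp /Re_mem [[x [b [El Er]]]|[a [c [g [e [H1 H2 H3 El Er]]]]]].
    by move: Hp; rewrite {}El {Er}; case: b.
  move: Hp; rewrite El /= andbT => /andP [/negbTE Hg /negbTE He]; subst.
  by exists a, c.
- move=> [a [b [H1 H2 H3 -> ->]]]; rewrite /=; exact: swap_in.
Qed.

Lemma Re_Cplus : (exists a b, adj a b) -> cond_Cplus R.
Proof.
move=> [a [b Hab]]; split.
- have [a0 [b0 [H1 H2 H3]]] : exists a0 b0, [/\ adj a0 b0, col a0 & ~~ col b0].
    have := col_proper Hab; case Ea: (col a); case Eb: (col b) => // _.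
      by exists a, b; rewrite Ea Eb.
    by exists b, a; rewrite Ea Eb adj_sym.
  have Hm : ([:: (a0, false); (b0, false)], [:: (b0, false); (a0, false)]) \in rplus R.
    apply/rplus_mem; by exists a0, b0.
  apply/eqP=> E; by rewrite E in Hm.
- move=> l r /Re_mem [[x [b0 [-> ->]]]|[a0 [c [g [e [H1 H2 H3 -> ->]]]]]] //=.
  by case: g; case: e.
Qed.

Lemma topos_mem (Rs : rsystem (letter X)) l r :
  (l, r) \in to_positive Rs <-> exists l0 r0, [/\ (l0, r0) \in Rs, l = [seq c.1 | c <- l0] & r = [seq c.1 | c <- r0]].
Proof.
split.
- case/mapP=> [[l0 r0] Hm [-> ->]]; by exists l0, r0.
- move=> [l0 [r0 [Hm -> ->]]]; apply/mapP; by exists (l0, r0).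
Qed.

Lemma Re_raam : same_congruence (to_positive (rplus R)) (raam_relations adj).
Proof.
have Hin : forall a c, adj a c -> col a -> ~~ col c ->
    ([:: a; c], [:: c; a]) \in to_positive (rplus R).
  move=> a c H1 H2 H3; apply/topos_mem.
  exists [:: (a, false); (c, false)], [:: (c, false); (a, false)]; split => //.
  apply/rplus_mem; by exists a, c.
move=> u v; split; apply: congr_incl => l r.
- case/topos_mem=> [l0 [r0 [/rplus_mem [a [c [H1 H2 H3 -> ->]]] -> ->]]].
  apply: congr_rule; apply/raam_mem; by exists a, c.
- case/raam_mem=> [a [c [H1 -> ->]]].
  have := col_proper H1; case Ea: (col a); case Ec: (col c) => // _.
    apply: congr_rule; apply: Hin => //; by rewrite Ec.
  apply: rst_sym; apply: congr_rule; apply: Hin => //; [by rewrite adj_sym|by rewrite Ea].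
Qed.
End Cong.


Theorem propositionB4
  (X : finType) (adj : rel X)
  (adj_sym : symmetric adj) (adj_irr : irreflexive adj)
  (* the graph has at least one edge (needed for R^+ <> empty in C^+) *)
  (has_edge : exists a b, adj a b)
  (* every closed path in the graph has even length *)
  (even_cycles : forall (x : X) (p : seq X),
      path adj x p -> last x p = x -> ~~ odd (size p))
  (* colouring: col x = true means x is black (x \in B), false white *)
  (col : X -> bool)
  (col_proper : forall a b, adj a b -> col a != col b)
  (* a total order on X u X^-1, given by an injective rank, in which
     every element of B u B^-1 is above every element of W u W^-1 *)
  (rk : letter X -> nat) (rk_inj : injective rk)
  (rk_BW : forall (a b : X) (g e : bool), col a -> ~~ col b -> rk (b, e) < rk (a, g)) :
  complete (Re adj col) /\
  same_congruence (Re adj col) (raag_relations adj) /\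
  cond_Cplus (Re adj col) /\
  (forall l r, (l, r) \in rplus (Re adj col) <->
     exists a b, [/\ adj a b, col a, ~~ col b,
                    l = [:: (a, false); (b, false)] & r = [:: (b, false); (a, false)]]) /\
  same_congruence (to_positive (rplus (Re adj col))) (raam_relations adj).
Proof.
split; first exact: Re_complete.
split; first exact: Re_raag.
split; first exact: Re_Cplus.
split; first exact: rplus_mem.
exact: Re_raam.
Qed.
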